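(* Let $0<c_1,c_2<1$ with $c_1+c_2=1$ and $c_1\neq c_2$. Then there exists a finitely supported complex sequence $u=(u_n)_{n\in\mathbb{N}}$ such that $$\sum_{k=1}^{\infty}\left[c_1(2k-1)|u_{2k-1}+u_{2k}|^2+c_2(2k)|u_{2k}+u_{2k+1}|^2\right]<\frac{c_1-c_2}{2}\sum_{k=1}^{\infty}\left[|u_{2k-1}|^2-|u_{2k}|^2\right].$$ *)

(* Defs.v *)
From HB Require Import structures.
From mathcomp Require Import all_boot all_order all_algebra.
From mathcomp Require Import reals.
From mathcomp.real_closed Require Import complex.
Set Implicit Arguments. Unset Strict Implicit. Unset Printing Implicit Defensive.
Import Order.TTheory GRing.Theory Num.Theory.
Local Open Scope ring_scope.

Definition cmod2 (R : rcfType) (z : complex R) : R :=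
  (complex.Re z) ^+ 2 + (complex.Im z) ^+ 2.

(* Main.v *)
Require Import Defs.
From HB Require Import structures.
From mathcomp Require Import all_boot all_order all_algebra.
From mathcomp Require Import reals.
From mathcomp.real_closed Require Import complex.
From mathcomp Require Import zify ring lra.
Import Order.TTheory GRing.Theory Num.Theory.
Local Open Scope ring_scope.

Section S.
Variable R : realType.

Definition hf (M k : nat) : R := \sum_(k <= j < M.+1) (j%:R)^-1.

Lemma hfS M k : (0 < k)%N ->
  hf M k - hf M k.+1 = if (k <= M)%N then (k%:R)^-1 else 0.
Proof.
move=> k0; case: leqP => kM.
  by rewrite /hf big_ltn ?ltnS // addrK.
by rewrite /hf !big_geq ?subrr //; lia.
Qed.

Lemma hf0 M k : (M < k)%N -> hf M k = 0.
Proof. by move=> h; rewrite /hf big_geq. Qed.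

Lemma hfg M k : (0 < k)%N -> k%:R * (hf M k - hf M k.+1) ^+ 2 = hf M k - hf M k.+1.
Proof.
move=> k0; rewrite hfS //; case: ifP => _; last by rewrite expr0n mulr0.
have kn : (k%:R : R) != 0 by rewrite pnatr_eq0 -lt0n.
by field.
Qed.

Lemma hfg_ge0 M k : 0 <= hf M k - hf M k.+1.
Proof.
case: k => [|k]; last by rewrite hfS //; case: ifP => // _; rewrite invr_ge0.
rewrite /hf big_ltn_cond //= ?ltnS // addrK invr0 //.
Qed.

Lemma harm_ge m : m%:R / 2 <= \sum_(1 <= j < (2 ^ m).+1) (j%:R : R)^-1.
Proof.
elim: m => [|m IH]; first by rewrite expn0 big_nat1 invr1 mul0r ler01.
rewrite (big_cat_nat _ (n := (2 ^ m).+1)) //=; last by rewrite ltnS leq_exp2l.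
have h : 2^-1 <= \sum_((2 ^ m).+1 <= j < (2 ^ m.+1).+1) (j%:R : R)^-1.
  apply: (@le_trans _ _ (\sum_((2 ^ m).+1 <= j < (2 ^ m.+1).+1) ((2 ^ m.+1)%:R : R)^-1)).
    rewrite sumr_const_nat subSS expnS mul2n -addnn addnK.
    rewrite -mulr_natr natrD.
    have y0 : (2 ^ m)%:R != 0 :> R by rewrite pnatr_eq0 expn_eq0.
    have y1 : (2 ^ m)%:R + (2 ^ m)%:R != 0 :> R by rewrite -natrD pnatr_eq0 addn_eq0 expn_eq0.
    rewrite le_eqVlt; apply/orP; left; apply/eqP; field; rewrite ?y0 ?y1 //.
  apply: ler_sum_nat => j /andP[j1 j2].
  rewrite lef_pV2 ?posrE ?ltr0n ?expn_gt0 //; last by lia.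
  by rewrite ler_nat -ltnS.
rewrite -natr1 mulrDl; lra.
Qed.

Lemma harm_big (B : R) : exists M, B < hf M 1.
Proof.
exists (2 ^ (Num.bound (2 * `|B|)))%N.
rewrite /hf; apply: (lt_le_trans _ (harm_ge _)).
have := archi_boundP (x := 2 * `|B|); rewrite mulr_ge0 ?normr_ge0 // => /(_ isT) h.
have := ler_norm B; lra.
Qed.

Lemma cm2 (a b : R) : cmod2 (a%:C + b%:C)%C = (a + b) ^+ 2.
Proof. by rewrite /cmod2 /= addr0 expr0n addr0. Qed.

Lemma cm1 (a : R) : cmod2 (a%:C)%C = a ^+ 2.
Proof. by rewrite /cmod2 /= expr0n addr0. Qed.


Definition mk (w : nat -> bool -> R) (n : nat) : R := w n./2 (odd n).

Lemma mkE1 w k : (0 < k)%N -> mk w (2 * k - 1) = w k.-1 true.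
Proof.
move=> k0; have -> : (2 * k - 1 = (k.-1).*2.+1)%N by rewrite -mul2n; lia.
by rewrite /mk /= odd_double /= uphalf_double.
Qed.

Lemma mkE2 w k : mk w (2 * k) = w k false.
Proof. by rewrite /mk mul2n odd_double doubleK. Qed.

Lemma mkE3 w k : mk w (2 * k + 1) = w k true.
Proof. by rewrite /mk addn1 mul2n /= odd_double /= uphalf_double. Qed.

Lemma mk_half N n : (N.*2 <= n)%N -> (N <= n./2)%N.
Proof. by move=> h; rewrite -[N]doubleK half_leq. Qed.

Lemma case1 (c1 c2 : R) : 0 < c1 < 1 -> 0 < c2 < 1 -> c2 < c1 ->
  exists (u : nat -> complex R) (N : nat),
    (forall n, (N <= n)%N -> u n = 0) /\
    \sum_(1 <= k < N.+1)
       (c1 * ((2 * k - 1)%N)%:R * cmod2 (u (2 * k - 1)%N + u (2 * k)%N)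
        + c2 * ((2 * k)%N)%:R * cmod2 (u (2 * k)%N + u (2 * k + 1)%N))
    < (c1 - c2) / 2 *
      \sum_(1 <= k < N.+1) (cmod2 (u (2 * k - 1)%N) - cmod2 (u (2 * k)%N)).
Proof.
move=> /andP[c10 c11] /andP[c20 c21] c12.
have [M HM] := harm_big (4 / (c1 - c2)).
set H := hf M 1 in HM.
pose w := fun (j : nat) (b : bool) => if b then hf M j.+1 else - hf M j.+1.
exists (fun n => (mk w n)%:C%C), (M.+1).*2; split.
  move=> n /mk_half hn; rewrite /mk /w hf0; last exact: ltnW.
  by case: (odd n); rewrite ?oppr0.

set N := (M.+1).*2.
have hN : hf M N.+1 = 0 by rewrite hf0 // /N -addnn; lia.
have eL : forall k, (1 <= k < N.+1)%N ->
   c1 * ((2 * k - 1)%N)%:R * cmod2 ((mk w (2 * k - 1))%:C + (mk w (2 * k))%:C)%C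
   + c2 * ((2 * k)%N)%:R * cmod2 ((mk w (2 * k))%:C + (mk w (2 * k + 1))%:C)%C
   <= 2 * c1 * (hf M k - hf M k.+1).
  move=> k /andP[k1 _]; rewrite !cm2 mkE1 // mkE2 mkE3 /w prednK //.
  rewrite addNr expr0n /= mulr0 addr0 -[in X in _ <= X](@hfg M k k1).
  have g0 := hfg_ge0 M k.
  have : ((2 * k - 1)%N%:R : R) <= 2 * k%:R.
    by rewrite -natrM ler_nat leq_subr.
  move: (hf M k - hf M k.+1) => g; set a := (_ %:R : R) => ha.
  have : 0 <= g ^+ 2 by rewrite sqr_ge0.
  have : 0 <= k%:R * g ^+ 2 := mulr_ge0 (ler0n _ _) (sqr_ge0 _).
  move: (g ^+ 2) => g2 h1 h2.
  rewrite -subr_ge0 (_ : _ - _ = c1 * ((2 * k%:R - a) * g2)); last by ring.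
  by apply: mulr_ge0; [exact: ltW | apply: mulr_ge0; rewrite ?subr_ge0].
have eR : forall k, (1 <= k < N.+1)%N ->
   cmod2 ((mk w (2 * k - 1))%:C)%C - cmod2 ((mk w (2 * k))%:C)%C
   = (- hf M k.+1 ^+ 2) - (- hf M k ^+ 2).
  move=> k /andP[k1 _]; rewrite !cm1 mkE1 // mkE2 /w prednK // sqrrN.
  by rewrite opprK addrC.
rewrite (eq_big_nat _ _ eR) telescope_sumr // hN.
rewrite expr0n /= oppr0 sub0r opprK -/H.
apply: (le_lt_trans (ler_sum_nat eL)).
rewrite -mulr_sumr (@telescope_sumr_eq _ 1 N.+1 (fun k => - hf M k)) //; last first.
  by move=> k _; rewrite opprK addrC.
rewrite hN -/H oppr0 sub0r opprK.
move: HM; rewrite ltr_pdivrMr ?subr_gt0 // => HM.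
nra.
Qed.

Lemma sum_if1 (N : nat) (a : R) : (0 < N)%N ->
  \sum_(1 <= k < N.+1) (if k == 1%N then a else 0) = a.
Proof.
move=> N0; rewrite big_ltn ?ltnS // eqxx big_nat_cond big1 ?addr0 //.
move=> k /andP[/andP[k2 _] _].
by rewrite (gtn_eqF k2).
Qed.

Lemma case2 (c1 c2 : R) : 0 < c1 < 1 -> 0 < c2 < 1 -> c1 + c2 = 1 -> c1 < c2 ->
  exists (u : nat -> complex R) (N : nat),
    (forall n, (N <= n)%N -> u n = 0) /\
    \sum_(1 <= k < N.+1)
       (c1 * ((2 * k - 1)%N)%:R * cmod2 (u (2 * k - 1)%N + u (2 * k)%N)
        + c2 * ((2 * k)%N)%:R * cmod2 (u (2 * k)%N + u (2 * k + 1)%N))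
    < (c1 - c2) / 2 *
      \sum_(1 <= k < N.+1) (cmod2 (u (2 * k - 1)%N) - cmod2 (u (2 * k)%N)).
Proof.
move=> /andP[c10 c11] /andP[c20 c21] csum c12.
set d := c2 - c1.
have d0 : 0 < d by rewrite subr_gt0.
have [M HM] := harm_big (4 / d ^+ 2).
set H := hf M 1 in HM.
set t := (1 - d) * H.
pose w := fun (j : nat) (b : bool) =>
  if b then (if j == 0%N then t else hf M j.+1) else - hf M j.
exists (fun n => (mk w n)%:C%C), (M.+1).*2; split.
  move=> n /mk_half hn; rewrite /mk /w.
  have -> : (n./2 == 0%N) = false by apply/negbTE; rewrite -lt0n; apply: leq_trans hn.
  have h1 : hf M (n./2).+1 = 0 by apply: hf0; exact: ltnW.
  have h2 : hf M n./2 = 0 by apply: hf0.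
  by rewrite h1 h2; case: (odd n); rewrite ?oppr0.
set N := (M.+1).*2.
have N0 : (0 < N)%N by [].
have hN : hf M N.+1 = 0 by rewrite hf0 // /N -addnn; lia.
have eL : forall k, (1 <= k < N.+1)%N ->
   c1 * ((2 * k - 1)%N)%:R * cmod2 ((mk w (2 * k - 1))%:C + (mk w (2 * k))%:C)%C
   + c2 * ((2 * k)%N)%:R * cmod2 ((mk w (2 * k))%:C + (mk w (2 * k + 1))%:C)%C
   = (if k == 1%N then c1 * (t - H) ^+ 2 else 0) + 2 * c2 * (hf M k - hf M k.+1).
  move=> k /andP[k1 _]; rewrite !cm2 mkE1 // mkE2 mkE3 /w.
  have -> : (k == 0%N) = false by apply/negbTE; rewrite -lt0n.
  rewrite -[in RHS](@hfg M k k1).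
  have -> : (k.-1 == 0%N) = (k == 1%N) by case: k k1 => [|[|k]].
  case: eqP => [->|_].
    rewrite -/H (_ : (2 * 1 - 1)%N = 1%N) //; rewrite natrM; ring.
  rewrite prednK // subrr expr0n /= mulr0 add0r natrM; ring.
have eR : forall k, (1 <= k < N.+1)%N ->
   cmod2 ((mk w (2 * k - 1))%:C)%C - cmod2 ((mk w (2 * k))%:C)%C
   = if k == 1%N then t ^+ 2 - H ^+ 2 else 0.
  move=> k /andP[k1 _]; rewrite !cm1 mkE1 // mkE2 /w sqrrN.
  have -> : (k.-1 == 0%N) = (k == 1%N) by case: k k1 => [|[|k]].
  by case: ifP => [/eqP ->|_]; rewrite ?prednK ?subrr.
rewrite (eq_big_nat _ _ eR) (eq_big_nat _ _ eL) big_split /= !sum_if1 //.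
rewrite -mulr_sumr (@telescope_sumr_eq _ 1 N.+1 (fun k => - hf M k)) //; last first.
  by move=> k _; rewrite opprK addrC.
rewrite hN -/H oppr0 sub0r opprK.
move: HM; rewrite ltr_pdivrMr ?exprn_gt0 // => HM.
have c1E : c1 = 1 - c2 by rewrite -csum addrK.
have dE : d = 2 * c2 - 1 by rewrite /d c1E; ring.
rewrite -subr_gt0 /t.
have -> : (c1 - c2) / 2 * (((1 - d) * H) ^+ 2 - H ^+ 2) -
  (c1 * ((1 - d) * H - H) ^+ 2 + 2 * c2 * H) = H / 2 * (H * d ^+ 2 - 4 * c2).
  by rewrite dE c1E; field.
have H0 : 0 < H.
  by rewrite -(pmulr_lgt0 _ (exprn_gt0 2 d0)); apply: lt_trans HM.
apply: mulr_gt0; first by rewrite divr_gt0.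
rewrite subr_gt0; lra.
Qed.

Lemma lemma3_aux (c1 c2 : R) :
  0 < c1 < 1 -> 0 < c2 < 1 -> c1 + c2 = 1 -> c1 != c2 ->
  exists (u : nat -> complex R) (N : nat),
    (forall n, (N <= n)%N -> u n = 0) /\
    \sum_(1 <= k < N.+1)
       (c1 * ((2 * k - 1)%N)%:R * cmod2 (u (2 * k - 1)%N + u (2 * k)%N)
        + c2 * ((2 * k)%N)%:R * cmod2 (u (2 * k)%N + u (2 * k + 1)%N))
    < (c1 - c2) / 2 *
      \sum_(1 <= k < N.+1) (cmod2 (u (2 * k - 1)%N) - cmod2 (u (2 * k)%N)).
Proof.
move=> h1 h2 hs hne; case: (ltgtP c1 c2) hne => // h _.
  exact: case2.
exact: case1.
Qed.
End S.

Theorem lemma3 (R : realType) (c1 c2 : R) :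
  0 < c1 < 1 -> 0 < c2 < 1 -> c1 + c2 = 1 -> c1 != c2 ->
  exists (u : nat -> complex R) (N : nat),
    (forall n, (N <= n)%N -> u n = 0) /\
    \sum_(1 <= k < N.+1)
       (c1 * ((2 * k - 1)%N)%:R * cmod2 (u (2 * k - 1)%N + u (2 * k)%N)
        + c2 * ((2 * k)%N)%:R * cmod2 (u (2 * k)%N + u (2 * k + 1)%N))
    < (c1 - c2) / 2 *
      \sum_(1 <= k < N.+1) (cmod2 (u (2 * k - 1)%N) - cmod2 (u (2 * k)%N)).
Proof. exact: lemma3_aux. Qed.
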